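(* For every cartesian cubical set $X$ and every $n\ge 0$, \[ (X_{\mathrm{I}})_n\ \cong\ X_n\times X_{n-1}^{\binom{n}{n-1}}\times\dots\times X_1^{\binom{n}{1}}\times X_0, \] where $X_k^{m}$ denotes the $m$-fold product of the set $X_k$, and $X_{\mathrm{I}}$ is the value at $X$ of the right adjoint to the path object functor $Y\mapsto Y^{\mathrm{I}}$.
   Context: Let $\mathbb{B}$ be the category of finite sets $[n]=\{\bot,x_1,\dots,x_n,\top\}$ ($n\ge0$, $\bot\ne\top$) and functions preserving $\bot,\top$; the cartesian cube category is $\mathbb{C}_\times=\mathbb{B}^{op}$, and cartesian cubical sets are presheaves on $\mathbb{C}_\times$. For a cubical set $X$, $X_k=X([k])$. $\mathrm{I}$ is the representable presheaf on $[1]$ and $Y^{\mathrm{I}}$ is the exponential; the functor $Y\mapsto Y^{\mathrm{I}}$ has a right adjoint, whose value at $X$ is written $X_{\mathrm{I}}$. *)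

(* Defs.v *)
From Stdlib Require Import FunctionalExtensionality ProofIrrelevance.
From mathcomp Require Import all_boot.
Set Implicit Arguments. Unset Strict Implicit. Unset Printing Implicit Defensive.

(* The object [n] = {bot, x_1, ..., x_n, top} is represented by 'I_n.+2,
   with bot = ord0 and top = ord_max (so x_i = i). *)
Definition bmap_ok m n (f : {ffun 'I_m.+2 -> 'I_n.+2}) : bool :=
  (f ord0 == ord0) && (f ord_max == ord_max).

Record bmap (m n : nat) := BMap { bfun :> {ffun 'I_m.+2 -> 'I_n.+2};
                                  bfunP : bmap_ok bfun }.

Lemma bmap_eq m n (f g : bmap m n) : (forall i, f i = g i) -> f = g.
Proof.
case: f => f fP; case: g => g gP /= H.
have E : f = g by apply/ffunP.
subst g; by rewrite (eq_irrelevance fP gP).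
Qed.

Lemma bid_ok n : bmap_ok [ffun i : 'I_n.+2 => i].
Proof. by rewrite /bmap_ok !ffunE !eqxx. Qed.
Definition bid n : bmap n n := BMap (bid_ok n).

Lemma bcomp_ok m n p (g : bmap n p) (f : bmap m n) :
  bmap_ok [ffun i => g (f i)].
Proof.
have := bfunP f; have := bfunP g.
rewrite /bmap_ok => /andP [/eqP g0 /eqP g1] /andP [/eqP f0 /eqP f1].
by rewrite !ffunE /= f0 f1 g0 g1 !eqxx.
Qed.
Definition bcomp m n p (g : bmap n p) (f : bmap m n) : bmap m p :=
  BMap (bcomp_ok g f).

Lemma bcompA m n p q (h : bmap p q) (g : bmap n p) (f : bmap m n) :
  bcomp h (bcomp g f) = bcomp (bcomp h g) f.
Proof. by apply: bmap_eq => i; rewrite /= !ffunE. Qed.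

(* A presheaf on C_x = B^op is a covariant functor B -> Type; X_k = X([k]).
   [pset] is the underlying data (graded types + action), [cset] adds the
   functor laws. *)
Record pset := PSet { pobj : nat -> Type;
                      pact : forall m n, bmap m n -> pobj m -> pobj n }.
Arguments pact p {m n} _ _.

Definition is_cset (X : pset) : Prop :=
  (forall n (x : pobj X n), pact X (bid n) x = x) /\
  (forall m n p (f : bmap m n) (g : bmap n p) (x : pobj X m),
      pact X (bcomp g f) x = pact X g (pact X f x)).

Record cset := CSet { cpset :> pset; csetP : is_cset cpset }.

Local Unset Implicit Arguments.
Record hom (X Y : pset) := Hom {
  hfun :> forall n, pobj X n -> pobj Y n;
  hnat : forall m n (f : bmap m n) (x : pobj X m),
           hfun n (pact X f x) = pact Y f (hfun m x) }.
Local Set Implicit Arguments.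
Arguments hfun {X Y} h n x.
Arguments hnat {X Y} h {m n} f x.

Lemma hom_eq (X Y : pset) (a b : hom X Y) :
  (forall n x, hfun a n x = hfun b n x) -> a = b.
Proof.
case: a => a an; case: b => b bn /= H.
have E : a = b.
  apply: functional_extensionality_dep => n.
  by apply: functional_extensionality => x.
subst b; by rewrite (proof_irrelevance _ an bn).
Qed.

Lemma hom_comp_nat (X Y Z : pset) (g : hom Y Z) (h : hom X Y) m n
  (f : bmap m n) (x : pobj X m) :
  hfun g n (hfun h n (pact X f x)) = pact Z f (hfun g m (hfun h m x)).
Proof. by rewrite (hnat h) (hnat g). Qed.
Definition hom_comp (X Y Z : pset) (g : hom Y Z) (h : hom X Y) : hom X Z :=
  @Hom X Z (fun n x => hfun g n (hfun h n x)) (hom_comp_nat g h).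

(* representable presheaf y[n] : (y[n])_k = Hom_C([k],[n]) = Hom_B([n],[k]) *)
Definition yon (n : nat) : pset :=
  @PSet (fun k => bmap n k) (fun k l (f : bmap k l) (g : bmap n k) => bcomp f g).

Definition Int : pset := yon 1.

Definition pprod (X Y : pset) : pset :=
  @PSet (fun n => (pobj X n * pobj Y n)%type)
        (fun m n f xy => (pact X f xy.1, pact Y f xy.2)).

Section Exp.
Variable Y : pset.

Definition pexp_obj n := hom (pprod (yon n) Int) Y.

Lemma precomp_nat m n (f : bmap m n) (a : pexp_obj m) k l (h : bmap k l)
  (x : pobj (pprod (yon n) Int) k) :
  hfun a l (bcomp (bcomp h x.1) f, bcomp h x.2)
  = pact Y h (hfun a k (bcomp x.1 f, x.2)).
Proof.
rewrite -bcompA.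
exact: (hnat a h (bcomp x.1 f, x.2)).
Qed.

Definition pexp_act m n (f : bmap m n) (a : pexp_obj m) : pexp_obj n :=
  @Hom (pprod (yon n) Int) Y
       (fun k x => hfun a k (bcomp x.1 f, x.2)) (precomp_nat f a).
End Exp.

Definition pexp (Y : pset) : pset := @PSet (pexp_obj Y) (@pexp_act Y).

Lemma expmap_nat (Y Y' : pset) (g : hom Y Y') m n (f : bmap m n)
  (a : pobj (pexp Y) m) :
  hom_comp g (pexp_act f a) = pexp_act f (hom_comp g a).
Proof. by apply: hom_eq. Qed.

Definition expmap (Y Y' : pset) (g : hom Y Y') : hom (pexp Y) (pexp Y') :=
  @Hom (pexp Y) (pexp Y') (fun n a => hom_comp g a) (expmap_nat g).

(* P is the value at X of a right adjoint to (-)^I: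
   a bijection Hom(Y^I, X) ~ Hom(Y, P), natural in the cubical set Y. *)
Definition right_adjoint_value (X P : cset) : Type :=
  { phi : forall Y : cset, hom (pexp Y) X -> hom Y P |
    (forall Y : cset, bijective (phi Y)) /\
    (forall (Y Y' : cset) (g : hom Y' Y) (a : hom (pexp Y) X),
        phi Y' (hom_comp a (expmap g)) = hom_comp (phi Y a) g) }.

(* Main.v *)
Require Import Defs.
From mathcomp Require Import all_boot.
From mathcomp Require Import zify.
From Stdlib Require Import FunctionalExtensionality.
Set Implicit Arguments. Unset Strict Implicit. Unset Printing Implicit Defensive.

Lemma bm0 a b (h : bmap a b) (i : 'I_a.+2) : nat_of_ord i = 0 -> h i = ord0.
Proof.
move=> e; have -> : i = ord0 by apply: val_inj.
by case/andP: (bfunP h) => /eqP.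
Qed.
Lemma bmN a b (h : bmap a b) (i : 'I_a.+2) : nat_of_ord i = a.+1 -> h i = ord_max.
Proof.
move=> e; have -> : i = ord_max by apply: val_inj.
by case/andP: (bfunP h) => _ /eqP.
Qed.

Lemma vinord k m : m < k.+1 -> nat_of_ord (@inord k m) = m.
Proof. exact: inordK. Qed.

Ltac vt := apply: val_inj => /=.

Definition inl_f m := [ffun i : 'I_m.+2 => @inord m.+2 (if nat_of_ord i == m.+1 then m.+2 else nat_of_ord i)].
Lemma inl_ok m : bmap_ok (inl_f m).
Proof.
rewrite /bmap_ok !ffunE; apply/andP; split; apply/eqP; vt; rewrite vinord /= ?eqxx; lia.
Qed.
Definition inlb m : bmap m m.+1 := BMap (inl_ok m).

Definition inr_f m := [ffun i : 'I_3 => @inord m.+2 (match nat_of_ord i with 0 => 0 | 1 => m.+1 | _ => m.+2 end)].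
Lemma inr_ok m : bmap_ok (inr_f m).
Proof.
rewrite /bmap_ok !ffunE; apply/andP; split; apply/eqP; vt; rewrite vinord /= ?eqxx; lia.
Qed.
Definition inrb m : bmap 1 m.+1 := BMap (inr_ok m).

Definition cop_f m k (u : bmap m k) (v : bmap 1 k) :=
  [ffun i : 'I_m.+3 => if nat_of_ord i == m.+1 then v (inord 1) else
     if nat_of_ord i == m.+2 then ord_max else u (inord (nat_of_ord i))].
Lemma cop_ok m k (u : bmap m k) (v : bmap 1 k) : bmap_ok (cop_f u v).
Proof.
rewrite /bmap_ok !ffunE /= !eqxx.
have -> : (m.+2 == m.+1) = false by lia.
by rewrite (@bm0 _ _ u) ?vinord ?eqxx.
Qed.
Definition copair m k (u : bmap m k) (v : bmap 1 k) : bmap m.+1 k := BMap (cop_ok u v).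

Lemma copair_inl m k (u : bmap m k) v : bcomp (copair u v) (inlb m) = u.
Proof.
apply: bmap_eq => i /=; rewrite !ffunE /=.
case: (eqVneq (nat_of_ord i) m.+1) => e.
  rewrite vinord // eqxx; have -> : (m.+2 == m.+1) = false by lia.
  by rewrite (bmN u).
have Hi := ltn_ord i.
have E1 : nat_of_ord (@inord m.+2 (nat_of_ord i)) = nat_of_ord i by rewrite vinord //; lia.
rewrite E1 (negPf e); have -> : (nat_of_ord i == m.+2) = false by lia.
congr (u _); vt; rewrite vinord //.
Qed.

Lemma copair_inr m k (u : bmap m k) v : bcomp (copair u v) (inrb m) = v.
Proof.
apply: bmap_eq => i /=; rewrite !ffunE /=.
case: i => [[|[|[|i]]] Hi] //=.
- rewrite vinord //; have -> : (0 == m.+1) = false by lia.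
  have -> : (0 == m.+2) = false by lia.
  by rewrite (bm0 u) ?vinord // (bm0 v).
- rewrite vinord // eqxx; congr (v _); vt; by rewrite vinord.
- rewrite vinord // eqxx; have -> : (m.+2 == m.+1) = false by lia.
  by rewrite (bmN v).
Qed.

Lemma copair_eta m k (h : bmap m.+1 k) : copair (bcomp h (inlb m)) (bcomp h (inrb m)) = h.
Proof.
apply: bmap_eq => i /=; rewrite !ffunE /=.
case: (eqVneq (nat_of_ord i) m.+1) => e1.
  have I1 : nat_of_ord (@inord 2 1) = 1 by rewrite vinord.
  congr (h _); vt; rewrite I1 vinord ?e1 //.
case: (eqVneq (nat_of_ord i) m.+2) => e2.
  by rewrite (bmN h).
congr (h _); vt.
have Hi := ltn_ord i.
have E : nat_of_ord (@inord m.+1 i) = i by rewrite vinord //; lia.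
rewrite E (negPf e1) vinord //.
Qed.

Lemma copair_comp m k l (h : bmap k l) (u : bmap m k) v :
  bcomp h (copair u v) = copair (bcomp h u) (bcomp h v).
Proof.
rewrite -{1}(copair_eta (bcomp h (copair u v))) -!bcompA copair_inl copair_inr //.
Qed.

Lemma bcomp_id_l m k (f : bmap m k) : bcomp (bid k) f = f.
Proof. by apply: bmap_eq => i; rewrite /= !ffunE. Qed.
Lemma bcomp_id_r m k (f : bmap m k) : bcomp f (bid m) = f.
Proof. by apply: bmap_eq => i; rewrite /= !ffunE. Qed.

Lemma copair_id m : copair (inlb m) (inrb m) = bid m.+1.
Proof. by rewrite -[RHS](copair_eta (bid m.+1)) !bcomp_id_l. Qed.

Lemma emb_nat n m (g : bmap n m.+1) k l (f : bmap k l) (x : pobj (pprod (yon m) Int) k) :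
  bcomp (copair (bcomp f x.1) (bcomp f x.2)) g = bcomp f (bcomp (copair x.1 x.2) g).
Proof. by rewrite -copair_comp bcompA. Qed.

Definition emb n m (g : bmap n m.+1) : pexp_obj (yon n) m :=
  @Hom (pprod (yon m) Int) (yon n) (fun k x => bcomp (copair x.1 x.2) g) (emb_nat g).

Definition ev n m (p : pexp_obj (yon n) m) : bmap n m.+1 := hfun p m.+1 (inlb m, inrb m).

Lemma emb_ev n m (p : pexp_obj (yon n) m) : emb (ev p) = p.
Proof.
apply: hom_eq => k [u v] /=.
have := hnat p (copair u v) (inlb m, inrb m).
by rewrite /= copair_inl copair_inr => ->.
Qed.

Lemma ev_emb n m (g : bmap n m.+1) : ev (emb g) = g.
Proof. by rewrite /ev /= copair_id bcomp_id_l. Qed.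

Definition lift1 m m' (f : bmap m m') : bmap m.+1 m'.+1 := copair (bcomp (inlb m') f) (inrb m').

Lemma act_emb n m m' (f : bmap m m') (g : bmap n m.+1) :
  pexp_act f (emb g) = emb (bcomp (lift1 f) g).
Proof.
apply: hom_eq => k [u v] /=.
by rewrite bcompA /lift1 copair_comp bcompA copair_inl copair_inr.
Qed.

Lemma ev_act n m m' (f : bmap m m') (p : pexp_obj (yon n) m) :
  ev (pexp_act f p) = bcomp (lift1 f) (ev p).
Proof.
have := hnat p (lift1 f) (inlb m, inrb m).
by rewrite /= /lift1 copair_inl copair_inr => ->.
Qed.

Definition sq n (S : {set 'I_n}) : seq nat := map (@nat_of_ord n) (enum S).
Lemma size_sq n (S : {set 'I_n}) : size (sq S) = #|S|.
Proof. by rewrite size_map cardE. Qed.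
Lemma uniq_sq n (S : {set 'I_n}) : uniq (sq S).
Proof. rewrite map_inj_uniq ?enum_uniq //; exact: val_inj. Qed.
Lemma mem_sq n (S : {set 'I_n}) (o : 'I_n) : (nat_of_ord o \in sq S) = (o \in S).
Proof. by rewrite (mem_map val_inj) mem_enum. Qed.
Lemma sq_lt n (S : {set 'I_n}) l : l \in sq S -> l < n.
Proof. by case/mapP => o _ ->. Qed.

Definition down m (v : 'I_m.+3) : 'I_m.+2 :=
  inord (if nat_of_ord v == m.+2 then m.+1 else nat_of_ord v).
Lemma down_val m (v : 'I_m.+3) :
  nat_of_ord (down v) = if nat_of_ord v == m.+2 then m.+1 else nat_of_ord v.
Proof.
have := ltn_ord v; rewrite /down; case: eqP => e H; rewrite vinord //; lia.
Qed.

Definition Tset n m (g : bmap n m.+1) : {set 'I_n} :=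
  [set i : 'I_n | nat_of_ord (g (inord i.+1)) != m.+1].

Definition rmap_f n m (g : bmap n m.+1) :=
  [ffun j : 'I_#|Tset g|.+2 => if nat_of_ord j == 0 then ord0 else
     if nat_of_ord j == #|Tset g|.+1 then ord_max else
     down (g (inord (nth 0 (sq (Tset g)) (nat_of_ord j).-1).+1))].
Lemma rmap_ok n m (g : bmap n m.+1) : bmap_ok (rmap_f g).
Proof. by rewrite /bmap_ok !ffunE /= !eqxx. Qed.
Definition rmap n m (g : bmap n m.+1) : bmap #|Tset g| m := BMap (rmap_ok g).

Lemma rmap_val n m (g : bmap n m.+1) (j : 'I_#|Tset g|.+2) :
  0 < j < #|Tset g|.+1 ->
  rmap g j = down (g (inord (nth 0 (sq (Tset g)) j.-1).+1)).
Proof.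
move=> H; rewrite /= ffunE.
have -> : (nat_of_ord j == 0) = false by lia.
have -> : (nat_of_ord j == #|Tset g|.+1) = false by lia.
by [].
Qed.

Definition genb_f n k (S : {set 'I_n}) :=
  [ffun i : 'I_n.+2 => if nat_of_ord i == 0 then ord0 else
     if nat_of_ord i == n.+1 then ord_max else
     if (nat_of_ord i).-1 \in sq S then @inord k.+2 (index (nat_of_ord i).-1 (sq S)).+1
     else inord k.+1].
Lemma genb_ok n k (S : {set 'I_n}) : bmap_ok (genb_f k S).
Proof. by rewrite /bmap_ok !ffunE /= !eqxx. Qed.
Definition genb n k (S : {set 'I_n}) : bmap n k.+1 := BMap (genb_ok k S).

Lemma genb_in n k (S : {set 'I_n}) (i : 'I_n.+2) : 0 < i < n.+1 -> #|S| = k ->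
  i.-1 \in sq S -> nat_of_ord (genb k S i) = (index i.-1 (sq S)).+1.
Proof.
move=> H Hk Hin; rewrite /= ffunE.
have -> : (nat_of_ord i == 0) = false by lia.
have -> : (nat_of_ord i == n.+1) = false by lia.
rewrite Hin vinord //.
have := Hin; rewrite -index_mem size_sq; lia.
Qed.

Lemma genb_out n k (S : {set 'I_n}) (i : 'I_n.+2) : 0 < i < n.+1 ->
  i.-1 \notin sq S -> nat_of_ord (genb k S i) = k.+1.
Proof.
move=> H Hin; rewrite /= ffunE.
have -> : (nat_of_ord i == 0) = false by lia.
have -> : (nat_of_ord i == n.+1) = false by lia.
by rewrite (negPf Hin) vinord.
Qed.

Lemma lift1_t m m' (f : bmap m m') (v : 'I_m.+3) : nat_of_ord v = m.+1 ->
  nat_of_ord (lift1 f v) = m'.+1.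
Proof.
move=> e; rewrite /= ffunE e eqxx ffunE.
have -> : nat_of_ord (@inord 2 1) = 1 by rewrite vinord.
by rewrite vinord.
Qed.

Lemma lift1_x m m' (f : bmap m m') (v : 'I_m.+3) : 0 < v < m.+1 ->
  nat_of_ord (lift1 f v) =
  (if nat_of_ord (f (inord v)) == m'.+1 then m'.+2 else nat_of_ord (f (inord v))).
Proof.
move=> H; rewrite /= ffunE.
have -> : (nat_of_ord v == m.+1) = false by lia.
have -> : (nat_of_ord v == m.+2) = false by lia.
rewrite !ffunE vinord //.
have := ltn_ord (f (inord v)); case: eqP => //; lia.
Qed.

Lemma bmap_eq_int a b (f g : bmap a b) :
  (forall i : 'I_a.+2, 0 < i < a.+1 -> nat_of_ord (f i) = nat_of_ord (g i)) -> f = g.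
Proof.
move=> H; apply: bmap_eq => i.
case: (eqVneq (nat_of_ord i) 0) => e0; first by rewrite (bm0 f) // (bm0 g).
case: (eqVneq (nat_of_ord i) a.+1) => e1; first by rewrite (bmN f) // (bmN g).
apply: val_inj; apply: H; have := ltn_ord i; lia.
Qed.

Lemma inord_int a (i : 'I_a.+2) : 0 < i -> @inord a.+1 (i.-1).+1 = i.
Proof. move=> H; have L := ltn_ord i; apply: val_inj => /=; rewrite vinord; lia. Qed.

Lemma Tset_mem n m (g : bmap n m.+1) (i : 'I_n.+2) : 0 < i < n.+1 ->
  (i.-1 \in sq (Tset g)) = (nat_of_ord (g i) != m.+1).
Proof.
move=> H; have lt : i.-1 < n by lia.
rewrite -[i.-1]/(nat_of_ord (Ordinal lt)) mem_sq inE /=.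
rewrite inord_int //; lia.
Qed.

Lemma bcompE a b c (g : bmap b c) (f : bmap a b) i : bcomp g f i = g (f i).
Proof. by rewrite /= ffunE. Qed.

Lemma claimA n m (g : bmap n m.+1) : bcomp (lift1 (rmap g)) (genb #|Tset g| (Tset g)) = g.
Proof.
apply: bmap_eq_int => i Hi; rewrite bcompE.
case: (boolP (i.-1 \in sq (Tset g))) => Hin.
- have E := genb_in Hi erefl Hin.
  have Hx : index i.-1 (sq (Tset g)) < #|Tset g| by rewrite -size_sq index_mem.
  have H1 : 0 < genb #|Tset g| (Tset g) i < #|Tset g|.+1 by rewrite E; lia.
  rewrite (lift1_x _ H1).
  have H2 : nat_of_ord (@inord #|Tset g|.+1 (genb #|Tset g| (Tset g) i)) = (index i.-1 (sq (Tset g))).+1.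
    by rewrite vinord E //; lia.
  have H3 : 0 < @inord #|Tset g|.+1 (genb #|Tset g| (Tset g) i) < #|Tset g|.+1 by rewrite H2; lia.
  rewrite (rmap_val H3) H2 /= nth_index // inord_int; last by lia.
  rewrite down_val.
  have := Tset_mem g Hi; rewrite Hin => /esym ne.
  have := ltn_ord (g i).
  move=> _; have ne' : (nat_of_ord (g i) == m.+1) = false by apply/negbTE; rewrite ne.
  case: (eqVneq (nat_of_ord (g i)) m.+2) => [e2|e2]; first by rewrite e2 !eqxx.
  by rewrite ne'.
- have E := genb_out #|Tset g| Hi Hin.
  rewrite lift1_t //.
  have := Tset_mem g Hi; rewrite (negPf Hin) => /esym/negbFE/eqP -> //.
Qed.

Lemma int_inord n (o : 'I_n) : 0 < @inord n.+1 o.+1 < n.+1.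
Proof. have H := ltn_ord o; rewrite vinord; lia. Qed.
Lemma int_inord_pred n (o : 'I_n) : (nat_of_ord (@inord n.+1 o.+1)).-1 = o.
Proof. have H := ltn_ord o; rewrite vinord //; lia. Qed.

Lemma claimB1 n k (S : {set 'I_n}) : #|S| = k -> Tset (genb k S) = S.
Proof.
move=> Hk; apply/setP => o; rewrite inE.
have Hi := int_inord o; have Ei := int_inord_pred o.
case: (boolP (o \in S)) => Ho.
- have Hin : (nat_of_ord (@inord n.+1 o.+1)).-1 \in sq S by rewrite Ei mem_sq.
  rewrite (genb_in Hi Hk Hin).
  have : index (nat_of_ord (@inord n.+1 o.+1)).-1 (sq S) < k by rewrite -Hk -size_sq index_mem.
  lia.
- rewrite (genb_out k Hi) ?eqxx // Ei mem_sq //.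
Qed.

Lemma claimB2 n k (S : {set 'I_n}) (Hk : #|S| = k) (j : 'I_#|Tset (genb k S)|.+2) :
  nat_of_ord (rmap (genb k S) j) = nat_of_ord j.
Proof.
case: (eqVneq (nat_of_ord j) 0) => e0; first by rewrite (bm0 _ e0) e0.
have cT : #|Tset (genb k S)| = k by rewrite claimB1.
case: (eqVneq (nat_of_ord j) #|Tset (genb k S)|.+1) => e1; first by rewrite (bmN _ e1) e1 cT.
have Hj := ltn_ord j.
have Hj' : 0 < j < #|Tset (genb k S)|.+1 by lia.
rewrite (rmap_val Hj').
have E : sq (Tset (genb k S)) = sq S by rewrite claimB1.
rewrite E down_val.
set l := nth 0 (sq S) j.-1.
have Hl : l \in sq S by rewrite mem_nth // size_sq; lia.
have ln : l < n by apply: sq_lt Hl.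
have Hi := int_inord (Ordinal ln); have Ei := int_inord_pred (Ordinal ln).
rewrite /= in Hi Ei.
have Hin : (nat_of_ord (@inord n.+1 l.+1)).-1 \in sq S by rewrite Ei.
have Ix : index l (sq S) = j.-1 by rewrite /l index_uniq ?uniq_sq // size_sq; lia.
rewrite (genb_in Hi Hk Hin) Ei Ix.
have -> : ((j.-1).+1 == k.+2) = false by lia.
lia.
Qed.

Lemma lift1_ne m m' (f : bmap m m') (v : 'I_m.+3) : nat_of_ord v != m.+1 ->
  nat_of_ord (lift1 f v) != m'.+1.
Proof.
move=> ne.
case: (eqVneq (nat_of_ord v) 0) => e0; first by rewrite (bm0 _ e0).
case: (eqVneq (nat_of_ord v) m.+2) => e1; first by rewrite (bmN _ e1); apply/eqP => /=; lia.
have Hv := ltn_ord v.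
rewrite lift1_x; last by lia.
have := ltn_ord (f (inord v)).
case: (eqVneq (nat_of_ord (f (inord v))) m'.+1) => e2 _ //=; apply/eqP; lia.
Qed.

Lemma down_lift1 m m' (f : bmap m m') (v : 'I_m.+3) : nat_of_ord v != m.+1 ->
  nat_of_ord (down (lift1 f v)) = nat_of_ord (f (down v)).
Proof.
move=> ne; rewrite !down_val.
case: (eqVneq (nat_of_ord v) 0) => e0.
  have d0 : nat_of_ord (down v) = 0 by rewrite down_val e0.
  by rewrite (bm0 _ e0) (bm0 f d0).
case: (eqVneq (nat_of_ord v) m.+2) => e1.
  have d1 : nat_of_ord (down v) = m.+1 by rewrite down_val e1 eqxx.
  by rewrite (bmN _ e1) (bmN f d1) /= eqxx.
have Hv := ltn_ord v.
rewrite lift1_x; last by lia.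
have -> : down v = inord v.
  apply: val_inj; rewrite /= down_val; have -> : (nat_of_ord v == m.+2) = false by apply/negbTE.
  by rewrite vinord //; lia.
have := ltn_ord (f (inord v)).
case: (eqVneq (nat_of_ord (f (inord v))) m'.+1) => e2 Hf; first by rewrite eqxx e2.
have -> : (nat_of_ord (f (inord v)) == m'.+2) = false by lia.
by [].
Qed.

Lemma claimN1 n m m' (f : bmap m m') (g : bmap n m.+1) :
  Tset (bcomp (lift1 f) g) = Tset g.
Proof.
apply/setP => o; rewrite !inE bcompE.
case: (eqVneq (nat_of_ord (g (inord o.+1))) m.+1) => e.
  by rewrite (lift1_t _ e) eqxx.
by rewrite (lift1_ne _ e).
Qed.

Lemma claimN2 n m m' (f : bmap m m') (g : bmap n m.+1)
  (j1 : 'I_#|Tset (bcomp (lift1 f) g)|.+2) (j2 : 'I_#|Tset g|.+2) :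
  nat_of_ord j1 = nat_of_ord j2 ->
  nat_of_ord (rmap (bcomp (lift1 f) g) j1) = nat_of_ord (bcomp f (rmap g) j2).
Proof.
move=> ej.
have cT : #|Tset (bcomp (lift1 f) g)| = #|Tset g| by rewrite claimN1.
case: (eqVneq (nat_of_ord j1) 0) => e0.
  by rewrite (bm0 _ e0) (bm0 (bcomp f (rmap g)) (etrans (esym ej) e0)).
case: (eqVneq (nat_of_ord j1) #|Tset (bcomp (lift1 f) g)|.+1) => e1.
  by rewrite (bmN _ e1) (bmN (bcomp f (rmap g)) (etrans (esym ej) (etrans e1 (congr1 S cT)))).
have H1 := ltn_ord j1.
have Hj1 : 0 < j1 < #|Tset (bcomp (lift1 f) g)|.+1 by lia.
have Hj2 : 0 < j2 < #|Tset g|.+1 by lia.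
rewrite (rmap_val Hj1) (bcompE f) (rmap_val Hj2).
have E : sq (Tset (bcomp (lift1 f) g)) = sq (Tset g) by rewrite claimN1.
rewrite E ej.
set l := nth 0 (sq (Tset g)) j2.-1.
have Hl : l \in sq (Tset g) by rewrite mem_nth // size_sq; lia.
have ln : l < n by apply: sq_lt Hl.
have Hi := int_inord (Ordinal ln); have Ei := int_inord_pred (Ordinal ln).
rewrite /= in Hi Ei.
have := Tset_mem g Hi; rewrite Ei Hl => /esym ne.
by rewrite bcompE down_lift1 // ne.
Qed.

Definition Dk n (k : nat) : {set {set 'I_n}} := [set A : {set 'I_n} | #|A| == k].
Lemma cardD n k : #|Dk n k| = 'C(n, k).
Proof. by rewrite card_draws card_ord. Qed.

Definition sub n (k : 'I_n.+1) (j : 'I_('C(n, k))) : {set 'I_n} :=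
  enum_val (cast_ord (esym (cardD n k)) j).
Arguments sub {n} k j.
Lemma sub_card n (k : 'I_n.+1) j : #|sub k j| = k.
Proof. by have := enum_valP (cast_ord (esym (cardD n k)) j); rewrite inE => /eqP. Qed.

Lemma card_lt n (S : {set 'I_n}) : #|S| < n.+1.
Proof. by have := max_card S; rewrite card_ord. Qed.
Definition Kc n (S : {set 'I_n}) : 'I_n.+1 := Ordinal (card_lt S).
Lemma memD n (S : {set 'I_n}) : S \in Dk n #|S|.
Proof. by rewrite inE. Qed.
Definition idx n (S : {set 'I_n}) : 'I_('C(n, Kc S)) :=
  cast_ord (cardD n #|S|) (enum_rank_in (memD S) S).

Lemma sub_idx n (S : {set 'I_n}) : sub (Kc S) (idx S) = S.
Proof.
rewrite /sub.
have -> : cast_ord (esym (cardD n (Kc S))) (idx S) = enum_rank_in (memD S) S by apply: val_inj.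
by rewrite enum_rankK_in // memD.
Qed.

Lemma rank_gen n k1 k2 (e : k1 = k2) (x : {set 'I_n}) (Hx : x \in Dk n k1)
  (i : 'I_#|Dk n k2|) : x = enum_val i -> nat_of_ord (enum_rank_in Hx x) = nat_of_ord i.
Proof. subst k2 => ex; subst x; by rewrite enum_valK_in. Qed.

Lemma idx_sub n (k : 'I_n.+1) j : nat_of_ord (idx (sub k j)) = nat_of_ord j.
Proof.
rewrite /idx /=.
by rewrite (@rank_gen n #|sub k j| k (@sub_card n k j) _ _ (cast_ord (esym (cardD n k)) j)).
Qed.

Definition Fam n (X : pset) := forall k : 'I_n.+1, 'I_('C(n, k)) -> pobj X k.

Definition Fc n (X : pset) (c : Fam n X) m (S : {set 'I_n}) (r : bmap #|S| m) : pobj X m :=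
  pact X r (c (Kc S) (idx S)).

Lemma Fc_congr n (X : pset) (c : Fam n X) m (S1 S2 : {set 'I_n})
  (r1 : bmap #|S1| m) (r2 : bmap #|S2| m) : S1 = S2 ->
  (forall j1 j2, nat_of_ord j1 = nat_of_ord j2 -> nat_of_ord (r1 j1) = nat_of_ord (r2 j2)) ->
  Fc c r1 = Fc c r2.
Proof.
move=> e; subst S2 => H.
have -> : r1 = r2 by apply: bmap_eq => i; apply: val_inj; exact: H.
by [].
Qed.

Lemma pact_id_gen n (X : cset) (c : Fam n X) (k k0 : 'I_n.+1) (j : 'I_('C(n, k)))
  (j0 : 'I_('C(n, k0))) (r : bmap k0 k) :
  nat_of_ord k0 = nat_of_ord k -> nat_of_ord j0 = nat_of_ord j ->
  (forall i, nat_of_ord (r i) = nat_of_ord i) -> pact X r (c k0 j0) = c k j.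
Proof.
move=> ek; have E : k0 = k by apply: val_inj. subst k0 => ej Hr.
have E : j0 = j by apply: val_inj. subst j0.
have -> : r = bid k by apply: bmap_eq => i; apply: val_inj; rewrite /= ffunE Hr.
by rewrite (csetP X).1.
Qed.

Lemma Fc_id n (X : cset) (c : Fam n X) (k : 'I_n.+1) (j : 'I_('C(n, k)))
  (S : {set 'I_n}) (r : bmap #|S| k) :
  #|S| = k -> nat_of_ord (idx S) = nat_of_ord j ->
  (forall i, nat_of_ord (r i) = nat_of_ord i) -> Fc c r = c k j.
Proof. move=> e1 e2 Hr; exact: (@pact_id_gen n X c k (Kc S) j (idx S) r e1 e2 Hr). Qed.

Definition Gc n (X : pset) (c : Fam n X) m (g : bmap n m.+1) : pobj X m :=
  Fc c (rmap g).

Lemma Gc_nat n (X : cset) (c : Fam n X) m m' (f : bmap m m') (g : bmap n m.+1) :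
  Gc c (bcomp (lift1 f) g) = pact X f (Gc c g).
Proof.
rewrite /Gc /Fc -(csetP X).2.
change (Fc c (rmap (bcomp (lift1 f) g)) = Fc c (bcomp f (rmap g))).
apply: Fc_congr; first exact: claimN1.
exact: claimN2.
Qed.

Definition Phi3 n (X : pset) (a : hom (pexp (yon n)) X) : Fam n X :=
  fun k j => hfun a k (emb (genb k (sub k j))).

Lemma Psi3_nat n (X : cset) (c : Fam n X) m m' (f : bmap m m')
  (p : pobj (pexp (yon n)) m) :
  Gc c (ev (pact (pexp (yon n)) f p)) = pact X f (Gc c (ev p)).
Proof.
have -> : ev (pact (pexp (yon n)) f p) = bcomp (lift1 f) (ev p) by exact: ev_act.
exact: Gc_nat.
Qed.

Definition Psi3 n (X : cset) (c : Fam n X) : hom (pexp (yon n)) X :=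
  @Hom (pexp (yon n)) X (fun m p => Gc c (ev p)) (Psi3_nat c).

Lemma Psi3K n (X : cset) (a : hom (pexp (yon n)) X) : Psi3 (Phi3 a) = a.
Proof.
apply: hom_eq => m p /=.
rewrite /Gc /Fc /Phi3 sub_idx.
rewrite -(hnat a).
change (hfun a m (pexp_act (rmap (ev p)) (emb (genb #|Tset (ev p)| (Tset (ev p))))) = hfun a m p).
by rewrite act_emb claimA emb_ev.
Qed.

Lemma Phi3K n (X : cset) (c : Fam n X) : Phi3 (Psi3 c) = c.
Proof.
apply: functional_extensionality_dep => k.
apply: functional_extensionality => j.
rewrite /Phi3 /= copair_id bcomp_id_l /Gc.
have Hk := @sub_card n k j.
apply: Fc_id.
- by rewrite claimB1.
- by rewrite claimB1 // idx_sub.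
- exact: claimB2.
Qed.

Lemma yon_cset n : is_cset (yon n).
Proof.
split => [k g|m k l f g x] /=; first exact: bcomp_id_l.
by rewrite bcompA.
Qed.
Definition Ycs n : cset := CSet (yon_cset n).

Lemma Phi1_nat (XI : cset) n (x : pobj XI n) k l (f : bmap k l) (g : pobj (yon n) k) :
  pact XI (bcomp f g) x = pact XI f (pact XI g x).
Proof. exact: (csetP XI).2. Qed.
Definition Phi1 (XI : cset) n (x : pobj XI n) : hom (Ycs n) XI :=
  @Hom (Ycs n) XI (fun k g => pact XI g x) (Phi1_nat x).
Definition Psi1 (XI : cset) n (h : hom (Ycs n) XI) : pobj XI n := hfun h n (bid n).

Lemma Psi1K (XI : cset) n (x : pobj XI n) : Psi1 (Phi1 x) = x.
Proof. exact: (csetP XI).1. Qed.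
Lemma Phi1K (XI : cset) n (h : hom (Ycs n) XI) : Phi1 (Psi1 h) = h.
Proof.
apply: hom_eq => k g /=; rewrite /Psi1.
have := hnat h g (bid n); rewrite /= bcomp_id_r => <- //.
Qed.

Unset Implicit Arguments.

Theorem corollary2p7 (X XI : cset) (adj : right_adjoint_value X XI) (n : nat) :
  exists f : pobj XI n -> (forall k : 'I_n.+1, 'I_('C(n, k)) -> pobj X k),
    bijective f.
Proof.
case: adj => phi [Hb _].
have [psi phiK psiK] := Hb (Ycs n).
exists (fun x => Phi3 (psi (Phi1 x))).
exists (fun c => Psi1 (phi (Ycs n) (Psi3 c))).
- move=> x /=; by rewrite Psi3K psiK Psi1K.
- move=> c /=; by rewrite Phi1K phiK Phi3K.
Qed.
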